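(* Let $k,\ell\ge 1$ and let $G$ and $H$ be graphs with $\delta(G)\ge k$ and $\delta(H)\ge \ell$. Then \[ \Gamma_{\times k\ell,t}(G\times H)\ge\Gamma_{\times k,t}(G)\cdot\Gamma_{\times \ell,t}(H). \]
   Context: For an integer $k\ge1$ and a graph $G$ with $\delta(G)\ge k$, a set $S\subseteq V(G)$ is a $k$-tuple total dominating set ($k$TDS) if $|N_G(x)\cap S|\ge k$ for every $x\in V(G)$, and $\Gamma_{\times k,t}(G)$ is the maximum cardinality of a minimal (with respect to inclusion) $k$TDS of $G$. The cross (direct) product $G\times H$ has vertex set $V(G)\times V(H)$, with $(g_1,h_1)\sim(g_2,h_2)$ iff $g_1g_2\in E(G)$ and $h_1h_2\in E(H)$. *)

(* Defs.v *)
From mathcomp Require Import all_boot.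
Set Implicit Arguments. Unset Strict Implicit. Unset Printing Implicit Defensive.

Definition simple_graph (T : finType) (e : rel T) : Prop :=
  symmetric e /\ irreflexive e.

Definition nbhd (T : finType) (e : rel T) (x : T) : {set T} := [set y | e x y].

Definition min_deg_ge (T : finType) (e : rel T) (k : nat) : Prop :=
  forall x : T, k <= #|nbhd e x|.

Definition is_kTDS (T : finType) (e : rel T) (k : nat) (S : {set T}) : bool :=
  [forall x, k <= #|nbhd e x :&: S|].

Definition is_minimal_kTDS (T : finType) (e : rel T) (k : nat) (S : {set T}) : bool :=
  is_kTDS e k S && [forall S' : {set T}, (S' \proper S) ==> ~~ is_kTDS e k S'].

Definition Gamma_kt (T : finType) (e : rel T) (k : nat) : nat :=
  \max_(S : {set T} | is_minimal_kTDS e k S) #|S|.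

Definition cross_rel (T1 T2 : finType) (e1 : rel T1) (e2 : rel T2) : rel (T1 * T2)%type :=
  fun u v => e1 u.1 v.1 && e2 u.2 v.2.

(* Main.v *)
Require Import Defs.
From mathcomp Require Import all_boot.
From mathcomp Require Import zify.

Lemma gamma_wit (T : finType) (e : rel T) (k : nat) :
  Gamma_kt e k = 0 \/ exists S, is_minimal_kTDS e k S /\ Gamma_kt e k = #|S|.
Proof.
rewrite /Gamma_kt.
case: (pickP (is_minimal_kTDS e k)) => [S HS|none].
  right.
  have [|S0 HS0 E] := @eq_bigmax_cond _ (is_minimal_kTDS e k) (fun S => #|S|).
    by apply/card_gt0P; exists S.
  by exists S0; split.
left; rewrite big_pred0 //.
Qed.

Lemma crit (T : finType) (e : rel T) k S a :
  is_minimal_kTDS e k S -> a \in S ->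
  exists g, a \in nbhd e g :&: S /\ #|nbhd e g :&: S| <= k.
Proof.
move=> /andP [/forallP tds /forallP mn] aS.
have := mn (S :\ a); rewrite properD1 //= => /forallPn [g].
rewrite -ltnNge => Hlt.
have E : nbhd e g :&: (S :\ a) = (nbhd e g :&: S) :\ a.
  by apply/setP => x; rewrite !inE; case: (x == a); rewrite ?andbF ?andbT.
rewrite E in Hlt.
have := cardsD1 a (nbhd e g :&: S).
have := tds g.
case Ha: (a \in nbhd e g :&: S) => /=.
  move=> H1; rewrite add1n => H2; exists g; split => //; lia.
move=> H1; rewrite add0n => H2; lia.
Qed.

Lemma nbhdX (T1 T2 : finType) (e1 : rel T1) (e2 : rel T2) S1 S2 g h :
  nbhd (cross_rel e1 e2) (g, h) :&: setX S1 S2 =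
  setX (nbhd e1 g :&: S1) (nbhd e2 h :&: S2).
Proof.
apply/setP => -[x y]; rewrite !inE /cross_rel /=.
by case: (e1 g x); case: (e2 h y); case: (x \in S1); case: (y \in S2).
Qed.

Lemma key (T1 T2 : finType) (e1 : rel T1) (e2 : rel T2) k l S1 S2 :
  is_minimal_kTDS e1 k S1 -> is_minimal_kTDS e2 l S2 ->
  is_minimal_kTDS (cross_rel e1 e2) (k * l) (setX S1 S2).
Proof.
move=> M1 M2; apply/andP; split.
  apply/forallP => -[g h]; rewrite nbhdX cardsX.
  move: M1 M2 => /andP [/forallP t1 _] /andP [/forallP t2 _].
  exact: leq_mul (t1 g) (t2 h).
apply/forallP => S'; apply/implyP => /properP [sub [[a b] abX abS]].
move: abX; rewrite inE /= => /andP [aS bS].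
have [g [ag cg]] := crit _ _ _ _ _ M1 aS.
have [h [bh ch]] := crit _ _ _ _ _ M2 bS.
apply/forallP => /(_ (g, h)).
set A := nbhd e1 g :&: S1; set B := nbhd e2 h :&: S2.
have s : nbhd (cross_rel e1 e2) (g, h) :&: S' \subset setX A B :\ (a, b).
  apply/subsetP => z; rewrite !inE => /andP [nz zS].
  have zX : z \in setX S1 S2 by apply: (subsetP sub).
  have := nbhdX _ _ e1 e2 S1 S2 g h => /setP /(_ z).
  rewrite !inE; move: zX; rewrite inE => /andP [-> ->]; rewrite nz => <-; rewrite andbT.
  rewrite andbT; apply/eqP => Ez; by rewrite -Ez zS in abS.
have c := subset_leq_card s.
have := cardsD1 (a, b) (setX A B).
rewrite cardsX inE /= ag bh /= add1n.
have := leq_mul cg ch.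
rewrite /A /B in c *; move=> H1 H2 H3; have H4 := leq_trans H3 c; move: H1 H2 H4; set P := _ * _; set Q := k * l; move=> H1 H2 H4; have := leq_trans H1 H4; by rewrite H2 ltnn.
Qed.

Theorem mainTheorem13 (T1 T2 : finType) (e1 : rel T1) (e2 : rel T2) (k l : nat) :
  simple_graph e1 -> simple_graph e2 ->
  1 <= k -> 1 <= l ->
  min_deg_ge e1 k -> min_deg_ge e2 l ->
  Gamma_kt (cross_rel e1 e2) (k * l) >= Gamma_kt e1 k * Gamma_kt e2 l.
Proof.
move=> _ _ _ _ _ _.
case: (gamma_wit _ e1 k) => [->|[S1 [M1 ->]]]; first by rewrite mul0n.
case: (gamma_wit _ e2 l) => [->|[S2 [M2 ->]]]; first by rewrite muln0.
rewrite -cardsX /Gamma_kt.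
exact: (@leq_bigmax_cond _ (is_minimal_kTDS (cross_rel e1 e2) (k * l)) (fun S => #|S|) _ (key _ _ _ _ _ _ _ _ M1 M2)).
Qed.
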